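(* Let $\mathbb{E}$ be a finitely complete category, $\Sigma$ a fibrational class of split epimorphisms, and suppose $\mathbb{E}$ is a $\Sigma$-Mal'tsev category. Let $d_0,d_1\colon X_1\rightrightarrows X_0$, $s_0\colon X_0\to X_1$ ($d_0s_0=d_1s_0=1_{X_0}$) be a reflexive graph such that $(d_0,s_0)\in\Sigma$. Let $X_2=\{(u,v)\in X_1\times X_1: d_1u=d_0v\}$ be the pullback of $d_0$ along $d_1$ (the object of composable pairs), and let $\iota_1=(1_{X_1},s_0d_1)\colon X_1\to X_2$ and $\iota_2=(s_0d_0,1_{X_1})\colon X_1\to X_2$. Then there is at most one morphism $m\colon X_2\to X_1$ with $m\iota_1=1_{X_1}$ and $m\iota_2=1_{X_1}$, and whenever such an $m$ exists, it is the composition of an internal category structure on this reflexive graph. Consequently, on such a reflexive graph there is at most one structure of internal category.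
   Context: A split epimorphism is a pair $(f,s)$ with $fs=1$. A class $\Sigma$ of split epimorphisms is fibrational if it contains all split epimorphisms $(f,s)$ with $f$ invertible and is stable under pullback along any morphism. A pair of morphisms with common codomain $Z$ is jointly extremally epic if it factors jointly through no non-invertible monomorphism into $Z$. $\mathbb{E}$ is $\Sigma$-Mal'tsev if for every split epimorphism $(f,s)\colon X\rightleftarrows Y$ in $\Sigma$ and every split epimorphism $(g,t)$ with $g\colon Y'\to Y$, letting $X'=Y'\times_YX$, $s'=(1_{Y'},sg)$, $\bar t=(tf,1_X)$, the pair $(s',\bar t)$ is jointly extremally epic. *)

(* Defs.v *)
Record Category := {
  Ob :> Type;
  Hom : Ob -> Ob -> Type;
  idm : forall X : Ob, Hom X X;
  comp : forall X Y Z : Ob, Hom Y Z -> Hom X Y -> Hom X Z;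
  comp_assoc : forall (X Y Z W : Ob) (h : Hom Z W) (g : Hom Y Z) (f : Hom X Y),
      comp X Z W h (comp X Y Z g f) = comp X Y W (comp Y Z W h g) f;
  comp_id_l : forall (X Y : Ob) (f : Hom X Y), comp X Y Y (idm Y) f = f;
  comp_id_r : forall (X Y : Ob) (f : Hom X Y), comp X X Y f (idm X) = f
}.

Arguments Hom {c} X Y.
Arguments idm {c} X.
Arguments comp {c X Y Z} g f.

Notation "g \o f" := (comp g f) (at level 40, left associativity).

Section Notions.
Context {C : Category}.

Definition is_iso {X Y : C} (f : Hom X Y) : Prop :=
  exists g : Hom Y X, g \o f = idm X /\ f \o g = idm Y.

Definition is_mono {X Y : C} (f : Hom X Y) : Prop :=
  forall (Z : C) (a b : Hom Z X), f \o a = f \o b -> a = b.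

Definition is_pullback {X Y Z P : C} (f : Hom X Z) (g : Hom Y Z)
  (p1 : Hom P X) (p2 : Hom P Y) : Prop :=
  f \o p1 = g \o p2 /\
  forall (Q : C) (q1 : Hom Q X) (q2 : Hom Q Y), f \o q1 = g \o q2 ->
    exists u : Hom Q P, (p1 \o u = q1 /\ p2 \o u = q2) /\
      forall v : Hom Q P, p1 \o v = q1 -> p2 \o v = q2 -> v = u.

Definition is_terminal (T : C) : Prop :=
  forall X : C, exists t : Hom X T, forall t' : Hom X T, t' = t.

Definition finitely_complete : Prop :=
  (exists T : C, is_terminal T) /\
  (forall (X Y Z : C) (f : Hom X Z) (g : Hom Y Z),
     exists (P : C) (p1 : Hom P X) (p2 : Hom P Y), is_pullback f g p1 p2).

Definition split_epi_class := forall X Y : C, Hom X Y -> Hom Y X -> Prop.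

Definition fibrational (Sigma : split_epi_class) : Prop :=
  (forall (X Y : C) (f : Hom X Y) (s : Hom Y X), Sigma X Y f s -> f \o s = idm Y) /\
  (forall (X Y : C) (f : Hom X Y) (s : Hom Y X),
      f \o s = idm Y -> is_iso f -> Sigma X Y f s) /\
  (forall (X Y Y' P : C) (f : Hom X Y) (s : Hom Y X) (h : Hom Y' Y)
          (p1 : Hom P Y') (p2 : Hom P X) (s' : Hom Y' P),
      Sigma X Y f s -> is_pullback h f p1 p2 ->
      p1 \o s' = idm Y' -> p2 \o s' = s \o h ->
      Sigma P Y' p1 s').

Definition jointly_extremally_epic {A B Z : C} (a : Hom A Z) (b : Hom B Z) : Prop :=
  forall (M : C) (n : Hom M Z) (a' : Hom A M) (b' : Hom B M),
    is_mono n -> n \o a' = a -> n \o b' = b -> is_iso n.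

Definition Sigma_Maltsev (Sigma : split_epi_class) : Prop :=
  forall (X Y Y' X' : C) (f : Hom X Y) (s : Hom Y X) (g : Hom Y' Y) (t : Hom Y Y')
         (p1 : Hom X' Y') (p2 : Hom X' X) (s' : Hom Y' X') (tbar : Hom X X'),
    Sigma X Y f s -> g \o t = idm Y ->
    is_pullback g f p1 p2 ->
    p1 \o s' = idm Y' -> p2 \o s' = s \o g ->
    p1 \o tbar = t \o f -> p2 \o tbar = idm X ->
    jointly_extremally_epic s' tbar.

(* Internal category structure on a reflexive graph (d0, d1, s0) with
   object of composable pairs X2 (pi1, pi2 : pullback of d0 along d1,
   d1 pi1 = d0 pi2), inclusions i1 = (1, s0 d1), i2 = (s0 d0, 1):
   m is a composition iff it respects domains/codomains, is unital and
   associative (associativity stated on the object X3 of composable triples,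
   for any choice of that pullback). *)
Definition internal_category_composition {X0 X1 X2 : C}
  (d0 d1 : Hom X1 X0) (s0 : Hom X0 X1) (pi1 pi2 : Hom X2 X1)
  (i1 i2 : Hom X1 X2) (m : Hom X2 X1) : Prop :=
  d0 \o m = d0 \o pi1 /\ d1 \o m = d1 \o pi2 /\
  m \o i1 = idm X1 /\ m \o i2 = idm X1 /\
  forall (X3 : C) (q1 q2 : Hom X3 X2) (a b : Hom X3 X2),
    is_pullback pi2 pi1 q1 q2 ->
    (* a = (m q1, pi2 q2) : (u,v,w) |-> (u;v, w) *)
    pi1 \o a = m \o q1 -> pi2 \o a = pi2 \o q2 ->
    (* b = (pi1 q1, m q2) : (u,v,w) |-> (u, v;w) *)
    pi1 \o b = pi1 \o q1 -> pi2 \o b = m \o q2 ->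
    m \o a = m \o b.

End Notions.

(* Main.v *)
Require Import Defs.

Section Helpers.
Context {C : Category}.

Lemma pb_ext {X Y Z P : C} (f : Hom X Z) (g : Hom Y Z) (p1 : Hom P X) (p2 : Hom P Y) :
  is_pullback f g p1 p2 -> forall Q (x y : Hom Q P),
  p1 \o x = p1 \o y -> p2 \o x = p2 \o y -> x = y.
Proof.
  intros [Hc Hu] Q x y H1 H2.
  destruct (Hu Q (p1 \o x) (p2 \o x)) as [u [_ Hv]].
  { rewrite !comp_assoc, Hc. reflexivity. }
  rewrite (Hv x eq_refl eq_refl), (Hv y (eq_sym H1) (eq_sym H2)). reflexivity.
Qed.

Lemma pb_intro {X Y Z P : C} (f : Hom X Z) (g : Hom Y Z) (p1 : Hom P X) (p2 : Hom P Y) :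
  is_pullback f g p1 p2 -> forall Q (q1 : Hom Q X) (q2 : Hom Q Y),
  f \o q1 = g \o q2 -> exists u, p1 \o u = q1 /\ p2 \o u = q2.
Proof.
  intros [_ Hu] Q q1 q2 H. destruct (Hu Q q1 q2 H) as [u [[E1 E2] _]]. eauto.
Qed.

Lemma jee_cancel (hC : finitely_complete (C := C)) {A B Z Y : C}
  (a : Hom A Z) (b : Hom B Z) : jointly_extremally_epic a b ->
  forall h h' : Hom Z Y, h \o a = h' \o a -> h \o b = h' \o b -> h = h'.
Proof.
  intros J h h' Ha Hb. destruct hC as [[T HT] Hpb].
  destruct (HT Z) as [tZ HtZ]. destruct (HT Y) as [tY HtY].
  destruct (Hpb Z Y T tZ tY) as [P [r1 [r2 HP]]].
  assert (pair : forall Q (x : Hom Q Z) (y : Hom Q Y),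
             exists u, r1 \o u = x /\ r2 \o u = y).
  { intros Q x y. apply (pb_intro _ _ _ _ HP).
    destruct (HT Q) as [tQ HtQ]. rewrite (HtQ (tZ \o x)), (HtQ (tY \o y)). reflexivity. }
  destruct (pair Z (idm Z) h) as [g [Hg1 Hg2]].
  destruct (pair Z (idm Z) h') as [g' [Hg1' Hg2']].
  destruct (Hpb Z Z P g g') as [E [e1 [e2 HE]]].
  assert (Hc : g \o e1 = g' \o e2) by (destruct HE; assumption).
  assert (He : e1 = e2).
  { transitivity ((r1 \o g) \o e1). { rewrite Hg1, comp_id_l. reflexivity. }
    rewrite <- comp_assoc, Hc, comp_assoc, Hg1', comp_id_l. reflexivity. }
  assert (Hmono : is_mono e1).
  { intros M x y Hxy. apply (pb_ext _ _ _ _ HE); [exact Hxy | rewrite <- He; exact Hxy]. }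
  assert (fact : forall W (c : Hom W Z), h \o c = h' \o c -> exists c', e1 \o c' = c).
  { intros W c Hcc. destruct (pb_intro _ _ _ _ HE W c c) as [c' [E1 _]].
    { apply (pb_ext _ _ _ _ HP); rewrite !comp_assoc, ?Hg1, ?Hg1', ?Hg2, ?Hg2'; auto. }
    eauto. }
  destruct (fact A a Ha) as [a' Ea]. destruct (fact B b Hb) as [b' Eb].
  destruct (J E e1 a' b' Hmono Ea Eb) as [k [Hk1 Hk2]].
  assert (Hhe : h \o e1 = h' \o e1).
  { transitivity ((r2 \o g) \o e1). { rewrite Hg2. reflexivity. }
    rewrite <- comp_assoc, Hc, comp_assoc, Hg2', <- He. reflexivity. }
  rewrite <- (comp_id_r _ _ _ h), <- (comp_id_r _ _ _ h'), <- Hk2, !comp_assoc, Hhe.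
  reflexivity.
Qed.

End Helpers.

Theorem proposition2p4 (C : Category) (Sigma : split_epi_class)
  (hC : finitely_complete (C := C)) (hS : fibrational Sigma)
  (hM : Sigma_Maltsev Sigma)
  (X0 X1 X2 : C) (d0 d1 : Hom X1 X0) (s0 : Hom X0 X1)
  (hd0 : d0 \o s0 = idm X0) (hd1 : d1 \o s0 = idm X0)
  (hSig : Sigma X1 X0 d0 s0)
  (pi1 pi2 : Hom X2 X1) (hX2 : is_pullback d1 d0 pi1 pi2)
  (i1 i2 : Hom X1 X2)
  (hi1a : pi1 \o i1 = idm X1) (hi1b : pi2 \o i1 = s0 \o d1)
  (hi2a : pi1 \o i2 = s0 \o d0) (hi2b : pi2 \o i2 = idm X1) :
  (forall m m' : Hom X2 X1,
      m \o i1 = idm X1 -> m \o i2 = idm X1 ->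
      m' \o i1 = idm X1 -> m' \o i2 = idm X1 -> m = m') /\
  (forall m : Hom X2 X1,
      m \o i1 = idm X1 -> m \o i2 = idm X1 ->
      internal_category_composition d0 d1 s0 pi1 pi2 i1 i2 m) /\
  (forall m m' : Hom X2 X1,
      internal_category_composition d0 d1 s0 pi1 pi2 i1 i2 m ->
      internal_category_composition d0 d1 s0 pi1 pi2 i1 i2 m' -> m = m').
Proof.
  assert (J : jointly_extremally_epic i1 i2).
  { apply (hM X1 X0 X1 X2 d0 s0 d1 s0 pi1 pi2 i1 i2); assumption. }
  assert (U : forall m m' : Hom X2 X1,
      m \o i1 = idm X1 -> m \o i2 = idm X1 ->
      m' \o i1 = idm X1 -> m' \o i2 = idm X1 -> m = m').
  { intros m m' H1 H2 H1' H2'. apply (jee_cancel hC i1 i2 J); congruence. }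
  split; [exact U|]. split.
  2:{ intros m m' (_&_&H1&H2&_) (_&_&H1'&H2'&_). apply U; assumption. }
  intros m Hm1 Hm2.
  assert (Hd0 : d0 \o m = d0 \o pi1).
  { apply (jee_cancel hC i1 i2 J).
    - rewrite <- !comp_assoc, Hm1, hi1a. reflexivity.
    - rewrite <- !comp_assoc, Hm2, hi2a, comp_id_r, comp_assoc, hd0, comp_id_l. reflexivity. }
  assert (Hd1 : d1 \o m = d1 \o pi2).
  { apply (jee_cancel hC i1 i2 J).
    - rewrite <- !comp_assoc, Hm1, hi1b, comp_id_r, comp_assoc, hd1, comp_id_l. reflexivity.
    - rewrite <- !comp_assoc, Hm2, hi2b. reflexivity. }
  split; [exact Hd0|]. split; [exact Hd1|]. split; [exact Hm1|]. split; [exact Hm2|].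
  intros X3 q1 q2 a b HX3 Ha1 Ha2 Hb1 Hb2.
  destruct hS as [_ [_ Hstab]].
  assert (HS2 : Sigma X2 X1 pi1 i1).
  { apply (Hstab X1 X0 X1 X2 d0 s0 d1 pi1 pi2 i1); assumption. }
  assert (Hc3 : pi2 \o q1 = pi1 \o q2) by (destruct HX3; assumption).
  destruct (pb_intro _ _ _ _ HX3 X2 (idm X2) (i1 \o pi2)) as [s' [Hs1 Hs2]].
  { rewrite comp_assoc, hi1a, comp_id_l, comp_id_r. reflexivity. }
  destruct (pb_intro _ _ _ _ HX3 X2 (i2 \o pi1) (idm X2)) as [tb [Ht1 Ht2]].
  { rewrite comp_assoc, hi2b, comp_id_l, comp_id_r. reflexivity. }
  assert (J3 : jointly_extremally_epic s' tb).
  { apply (hM X2 X1 X2 X3 pi1 i1 pi2 i2 q1 q2 s' tb); assumption. }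
  apply (jee_cancel hC s' tb J3).
  -
    assert (E1 : a \o s' = i1 \o m).
    { apply (pb_ext _ _ _ _ hX2).
      - rewrite !comp_assoc, Ha1, hi1a, comp_id_l, <- comp_assoc, Hs1, comp_id_r. reflexivity.
      - rewrite !comp_assoc, Ha2, hi1b, <- !comp_assoc, Hs2, Hd1, !comp_assoc, hi1b. reflexivity. }
    assert (E2 : b \o s' = idm X2).
    { apply (pb_ext _ _ _ _ hX2).
      - rewrite !comp_assoc, Hb1, comp_id_r, <- comp_assoc, Hs1, comp_id_r. reflexivity.
      - rewrite !comp_assoc, Hb2, comp_id_r, <- comp_assoc, Hs2, comp_assoc, Hm1, comp_id_l.
        reflexivity. }
    rewrite <- !comp_assoc, E1, E2, comp_assoc, Hm1, comp_id_l, comp_id_r. reflexivity.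
  - assert (E1 : a \o tb = idm X2).
    { apply (pb_ext _ _ _ _ hX2).
      - rewrite !comp_assoc, Ha1, comp_id_r, <- comp_assoc, Ht1, comp_assoc, Hm2, comp_id_l.
        reflexivity.
      - rewrite !comp_assoc, Ha2, comp_id_r, <- comp_assoc, Ht2, comp_id_r. reflexivity. }
    assert (E2 : b \o tb = i2 \o m).
    { apply (pb_ext _ _ _ _ hX2).
      - rewrite !comp_assoc, Hb1, hi2a, <- !comp_assoc, Ht1, Hd0, !comp_assoc, hi2a.
        reflexivity.
      - rewrite !comp_assoc, Hb2, hi2b, comp_id_l, <- comp_assoc, Ht2, comp_id_r. reflexivity. }
    rewrite <- !comp_assoc, E1, E2, comp_assoc, Hm2, comp_id_l, comp_id_r. reflexivity.
Qed.
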